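(* Let $1\le k\le d$ be fixed. Then: (a) $0\le\mu_k(\rho)\le\log k$ for all $d$-dimensional states $\rho$; (b) $\mu_k(\rho)=\inf\{\nu:\ \Pi_I\rho\Pi_I\le2^\nu\Delta(\rho)\ \text{for all } I\subseteq[d] \text{ with } |I|\le k\}$; (c) $\mu_k$ is monotone under SIO: $\mu_k(\Lambda(\rho))\le\mu_k(\rho)$ for every SIO $\Lambda$ and every state $\rho$; (d) $\mu_k$ is lower semicontinuous.
   Context: Fixed computational basis $\{|i\rangle\}_{i=1}^d$; $\Delta(X)=\sum_i|i\rangle\langle i|X|i\rangle\langle i|$; $\Pi_I=\sum_{i\in I}|i\rangle\langle i|$; logs base 2; $\|\cdot\|_\infty$ is the operator norm. $R^\rho=\Delta(\rho)^{-1/2}\rho\,\Delta(\rho)^{-1/2}$ with the inverse taken on the support, and $\mu_k(\rho)=\max_{I\subseteq[d],|I|\le k}\log\|\Pi_IR^\rho\Pi_I\|_\infty$. SIO (on $\mathbb C^d$): channels $\Lambda(X)=\sum_\alpha K_\alpha XK_\alpha^\dagger$ where each $K_\alpha$ and $K_\alpha^\dagger$ maps every computational basis vector to a multiple of a computational basis vector. *)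

(* Defs.v *)
From HB Require Import structures.
From mathcomp Require Import all_boot all_order all_algebra.
From mathcomp Require Import all_classical all_reals all_analysis.
From mathcomp.real_closed Require Import complex.

Set Implicit Arguments.
Unset Strict Implicit.
Unset Printing Implicit Defensive.
Import Order.TTheory GRing.Theory Num.Theory.
Local Open Scope ring_scope.

Section Defs.
Context {R : realType}.
Local Notation C := R[i].

Definition adj {m n} (A : 'M[C]_(m, n)) : 'M[C]_(n, m) := (map_mx Num.conj A)^T.

Definition psd {d} (A : 'M[C]_d) : Prop :=
  forall v : 'cV[C]_d, 0 <= (adj v *m A *m v) 0 0.

Definition loewner_le {d} (A B : 'M[C]_d) : Prop := psd (B - A).

Definition is_state {d} (rho : 'M[C]_d) : Prop := psd rho /\ \tr rho = 1.

Definition dephase {d} (X : 'M[C]_d) : 'M[C]_d :=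
  \matrix_(i, j) (if i == j then X i i else 0).

Definition projI {d} (I : {set 'I_d}) : 'M[C]_d :=
  \matrix_(i, j) (if (i == j) && (i \in I) then 1 else 0).

(* Delta(rho)^{-1/2} with inverse taken on the support: Delta(rho) is diagonal
   with entries rho_ii, so this is the diagonal matrix with entries
   rho_ii^{-1/2} if rho_ii > 0 and 0 otherwise. *)
Definition dephase_invsqrt {d} (rho : 'M[C]_d) : 'M[C]_d :=
  \matrix_(i, j) (if (i == j) && (0 < complex.Re (rho i i))
                  then ((Num.sqrt (complex.Re (rho i i)))^-1)%:C%C else 0).

Definition Rmat {d} (rho : 'M[C]_d) : 'M[C]_d :=
  dephase_invsqrt rho *m rho *m dephase_invsqrt rho.

Definition vnorm {d} (v : 'cV[C]_d) : R :=
  Num.sqrt (\sum_i (complex.Re (v i 0) ^+ 2 + complex.Im (v i 0) ^+ 2)).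

Definition opnorm {d} (A : 'M[C]_d) : R :=
  sup [set x : R | exists v : 'cV[C]_d, vnorm v = 1 /\ x = vnorm (A *m v)].

Definition log2e (x : R) : \bar R :=
  if 0 < x then (ln x / ln 2)%:E else -oo%E.

Definition muk (k : nat) {d} (rho : 'M[C]_d) : \bar R :=
  \big[Order.max/-oo%E]_(I : {set 'I_d} | (#|I| <= k)%N)
     log2e (opnorm (projI I *m Rmat rho *m projI I)).

(* incoherent Kraus operator: maps every basis vector e_j to a multiple of a
   basis vector, i.e. column j has at most one nonzero entry *)
Definition maps_basis_to_basis {d} (K : 'M[C]_d) : Prop :=
  forall j : 'I_d, exists i : 'I_d, forall i' : 'I_d, i' != i -> K i' j = 0.

Definition SIO_kraus {d m} (K : 'I_m -> 'M[C]_d) : Prop :=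
  (forall a, maps_basis_to_basis (K a) /\ maps_basis_to_basis (adj (K a))) /\
  \sum_a adj (K a) *m K a = 1%:M.

Definition kraus_apply {d m} (K : 'I_m -> 'M[C]_d) (X : 'M[C]_d) : 'M[C]_d :=
  \sum_a K a *m X *m adj (K a).

Definition lsc_on_states {d} (f : 'M[C]_d -> \bar R) : Prop :=
  forall rho, is_state rho -> forall t : R, (t%:E < f rho)%E ->
    exists2 eps : R, 0 < eps & forall sigma, is_state sigma ->
      (forall i j, `|sigma i j - rho i j| < eps%:C%C) -> (t%:E < f sigma)%E.

End Defs.

(* Main.v *)
Require Import Defs.
From HB Require Import structures.
From mathcomp Require Import all_boot all_order all_algebra.
From mathcomp Require Import all_classical all_reals all_analysis.
From mathcomp.real_closed Require Import complex.
From mathcomp Require Import ring lra.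
Set Implicit Arguments. Unset Strict Implicit. Unset Printing Implicit Defensive.
Import Order.TTheory GRing.Theory Num.Theory.
Local Open Scope ring_scope.

Section Aux.
Variable R : realType.
Local Notation C := R[i].
Local Open Scope complex_scope.

Definition sq (z : C) : R := complex.Re z ^+ 2 + complex.Im z ^+ 2.
Lemma sq_ge0 z : 0 <= sq z.
Proof. by rewrite /sq addr_ge0 ?sqr_ge0. Qed.
Lemma conjM_sq z : z^* * z = (sq z)%:C.
Proof. case: z => a b; rewrite /sq /=; simpc; congr (_ +i* _); lra. Qed.
Lemma sq_eq0 z : sq z = 0 -> z = 0.
Proof.
case: z => a b; rewrite /sq /= => h.
have ha : a ^+ 2 = 0 by apply/eqP; rewrite eq_le sqr_ge0 andbT -h lerDl sqr_ge0.
have hb : b ^+ 2 = 0 by apply/eqP; rewrite eq_le sqr_ge0 andbT -h lerDr sqr_ge0.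
by move: ha hb => /eqP; rewrite sqrf_eq0 => /eqP -> /eqP; rewrite sqrf_eq0 => /eqP ->.
Qed.

Lemma ge0C (z : C) : 0 <= z -> z = (complex.Re z)%:C /\ 0 <= complex.Re z.
Proof. case: z => a b; rewrite lecE /= => /andP[/eqP -> h]; split => //; exact: complexr0. Qed.

Definition nrm2 {d} (v : 'cV[C]_d) : R := \sum_i sq (v i 0).
Lemma nrm2_ge0 d (v : 'cV[C]_d) : 0 <= nrm2 v.
Proof. by apply: sumr_ge0 => i _; apply: sq_ge0. Qed.

Definition form {d} (A : 'M[C]_d) (x y : 'cV[C]_d) : C := (adj x *m A *m y) 0 0.

Lemma formE d (A : 'M[C]_d) x y :
  form A x y = \sum_i \sum_j (x i 0)^* * A i j * y j 0.
Proof.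
rewrite /form mxE exchange_big /=; apply: eq_bigr => j _.
rewrite mxE mulr_suml; apply: eq_bigr => i _.
by rewrite /adj !mxE.
Qed.

Lemma formDl d (A : 'M[C]_d) x1 x2 y : form A (x1 + x2) y = form A x1 y + form A x2 y.
Proof.
rewrite !formE -big_split; apply: eq_bigr => i _; rewrite -big_split.
by apply: eq_bigr => j _; rewrite !mxE rmorphD /= !mulrDl.
Qed.
Lemma formDr d (A : 'M[C]_d) x y1 y2 : form A x (y1 + y2) = form A x y1 + form A x y2.
Proof.
rewrite !formE -big_split; apply: eq_bigr => i _; rewrite -big_split.
by apply: eq_bigr => j _; rewrite !mxE !mulrDr.
Qed.
Lemma formZl d (A : 'M[C]_d) c x y : form A (c *: x) y = c^* * form A x y.
Proof.
rewrite !formE mulr_sumr; apply: eq_bigr => i _; rewrite mulr_sumr.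
by apply: eq_bigr => j _; rewrite !mxE rmorphM /= !mulrA.
Qed.
Lemma formZr d (A : 'M[C]_d) c x y : form A x (c *: y) = c * form A x y.
Proof.
rewrite !formE mulr_sumr; apply: eq_bigr => i _; rewrite mulr_sumr.
by apply: eq_bigr => j _; rewrite !mxE mulrCA.
Qed.
Lemma formDm d (A B : 'M[C]_d) x y : form (A + B) x y = form A x y + form B x y.
Proof.
rewrite !formE -big_split; apply: eq_bigr => i _; rewrite -big_split.
by apply: eq_bigr => j _; rewrite !mxE mulrDr mulrDl.
Qed.
Lemma formZm d (A : 'M[C]_d) c x y : form (c *: A) x y = c * form A x y.
Proof.
rewrite !formE mulr_sumr; apply: eq_bigr => i _; rewrite mulr_sumr.
by apply: eq_bigr => j _; rewrite !mxE mulrCA !mulrA.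
Qed.
Lemma formNm d (A : 'M[C]_d) x y : form (- A) x y = - form A x y.
Proof. by rewrite -scaleN1r formZm mulN1r. Qed.
Lemma formBm d (A B : 'M[C]_d) x y : form (A - B) x y = form A x y - form B x y.
Proof. by rewrite formDm formNm. Qed.
Lemma form0m d (x y : 'cV[C]_d) : form 0 x y = 0.
Proof. by rewrite /form mulmx0 mul0mx mxE. Qed.
Lemma formSm d m (A : 'I_m -> 'M[C]_d) x y :
  form (\sum_a A a) x y = \sum_a form (A a) x y.
Proof.
elim/big_rec2: _; first exact: form0m.
by move=> a s1 s2 _ <-; rewrite formDm.
Qed.

Lemma formI d (x y : 'cV[C]_d) : form 1%:M x y = \sum_i (x i 0)^* * y i 0.
Proof.
rewrite formE; apply: eq_bigr => i _.
rewrite (bigD1 i) //= big1 ?addr0; first by rewrite mxE eqxx mulr1.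
by move=> j /negbTE ji; rewrite mxE eq_sym ji mulr0 mul0r.
Qed.

Lemma formI_nrm2 d (x : 'cV[C]_d) : form 1%:M x x = (nrm2 x)%:C.
Proof.
rewrite formI /nrm2 rmorph_sum; apply: eq_bigr => i _; exact: conjM_sq.
Qed.

Lemma psd1 d : psd (1%:M : 'M[C]_d).
Proof. move=> v; rewrite -/(form _ _ _) formI_nrm2 lecR; exact: nrm2_ge0. Qed.

Lemma psd_form d (A : 'M[C]_d) v : psd A -> 0 <= form A v v.
Proof. by move=> h; apply: h. Qed.

Lemma psd_herm d (A : 'M[C]_d) x y : psd A -> form A y x = (form A x y)^*.
Proof.
move=> hA.
have h1 := psd_form (x + y) hA. have h2 := psd_form (x + 'i *: y) hA.
have ha := psd_form x hA; have he := psd_form y hA.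
rewrite !(formDl, formDr, formZl, formZr) in h1 h2.
move: h1 h2 ha he.
move: (form A x x) (form A x y) (form A y x) (form A y y) => [a1 a2] [b1 b2] [c1 c2] [e1 e2].
rewrite !lecE /=; simpc => /andP[/eqP h1 _] /andP[/eqP h2 _] /andP[/eqP h3 _] /andP[/eqP h4 _].
rewrite /=; simpc; congr (_ +i* _); lra.
Qed.

Lemma quad_lemma (a e N : R) : 0 <= N -> 0 <= e ->
  (forall t, 0 <= a + 2 * t * N + t ^+ 2 * N * e) -> N <= a * e.
Proof.
move=> N0 e0 h.
have [e_eq0|e_gt0] := eqVneq e 0.
  rewrite e_eq0 mulr0; have [N_eq0|N_gt0] := eqVneq N 0; first by rewrite N_eq0.
  have Np : 0 < N by rewrite lt_def N_gt0.
  have := h (- (`|a| + 1) / (2 * N)); rewrite e_eq0 mulr0 addr0.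
  have -> : 2 * (- (`|a| + 1) / (2 * N)) * N = - (`|a| + 1).
    by field.
  have := ler_norm a; rewrite -normrN => h1; have := ler_norm (-a) => h2.
  move=> h3; exfalso.
  rewrite normrN in h2; lra.
have ep : 0 < e by rewrite lt_def e_gt0.
have := h (- e^-1).
have -> : a + 2 * - e^-1 * N + (- e^-1) ^+ 2 * N * e = a - N / e.
  by field.
move=> h1; have := mulr_ge0 (ltW ep) h1.
rewrite mulrBr mulrCA divff // mulr1 subr_ge0 mulrC //.
Qed.

Lemma psd_CS d (A : 'M[C]_d) x y : psd A ->
  sq (form A x y) <= complex.Re (form A x x) * complex.Re (form A y y).
Proof.
move=> hA.
have hc := psd_herm x y hA.
have ha := psd_form x hA; have he := psd_form y hA.
apply: quad_lemma; [exact: sq_ge0| exact: (ge0C he).2|].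
move=> t.
have := psd_form (x + ((t%:C) * (form A x y)^*) *: y) hA.
rewrite !(formDl, formDr, formZl, formZr) hc.
move: ha he; move: (form A x x) (form A x y) (form A y y) => [a1 a2] [b1 b2] [e1 e2].
rewrite !lecE /= /sq; simpc => /andP[/eqP h3 _] /andP[/eqP h4 _] /andP[_ h].
rewrite h4 /= in h *; apply: (le_trans h); rewrite le_eqVlt; apply/orP; left; apply/eqP; ring.
Qed.

Lemma cR (x : R) : Num.conj (x%:C : C) = x%:C.
Proof. exact: (conjc_real x). Qed.

Lemma sqC (c : R) : sq c%:C = c ^+ 2.
Proof. by rewrite /sq /= expr0n /= addr0. Qed.
Lemma sq_scale (c : R) z : sq (c%:C * z) = c ^+ 2 * sq z.
Proof. case: z => a b; rewrite /sq /=; simpc; rewrite /=; ring. Qed.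
Lemma nrm2_scale d (c : R) (v : 'cV[C]_d) : nrm2 (c%:C *: v) = c ^+ 2 * nrm2 v.
Proof.
by rewrite /nrm2 mulr_sumr; apply: eq_bigr => i _; rewrite mxE sq_scale.
Qed.
Lemma nrm2_eq0 d (v : 'cV[C]_d) : nrm2 v = 0 -> v = 0.
Proof.
move=> /eqP; rewrite psumr_eq0; last by move=> i _; apply: sq_ge0.
move=> /allP h; apply/matrixP => i j; rewrite (ord1 j) mxE.
by apply: sq_eq0; apply/eqP; apply: h; rewrite mem_index_enum.
Qed.
Lemma nrm2_0 d : nrm2 (0 : 'cV[C]_d) = 0.
Proof. by rewrite /nrm2 big1 // => i _; rewrite mxE /sq /= expr0n /= addr0. Qed.

Definition fro {d} (A : 'M[C]_d) : R := \sum_a nrm2 (\col_j ((A a j)^*)).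

Lemma nrm2_mul d (A : 'M[C]_d) v : nrm2 (A *m v) <= fro A * nrm2 v.
Proof.
rewrite /nrm2 /fro mulr_suml; apply: ler_sum => a _.
have -> : (A *m v) a 0 = form 1%:M (\col_j (A a j)^*) v.
  rewrite formI mxE; apply: eq_bigr => j _; rewrite mxE.
  by rewrite -[X in _ = X * _]/(conjc (conjc (A a j))) conjcK.
have := psd_CS (\col_j (A a j)^*) v (@psd1 d).
by rewrite !formI_nrm2 /=.
Qed.

Definition Sop {d} (A : 'M[C]_d) :=
  [set x : R | exists v : 'cV[C]_d, vnorm v = 1 /\ x = vnorm (A *m v)]%classic.

Lemma vnorm1 d (v : 'cV[C]_d) : (vnorm v = 1) <-> (nrm2 v = 1).
Proof.
rewrite /vnorm -/(nrm2 v); split => h; last by rewrite h sqrtr1.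
by rewrite -(@sqr_sqrtr _ (nrm2 v)) ?nrm2_ge0 // h expr1n.
Qed.

Lemma Sop_ub d (A : 'M[C]_d) : has_ubound (Sop A).
Proof.
exists (Num.sqrt (fro A)) => x [v [/vnorm1 hv ->]].
rewrite /vnorm -/(nrm2 _) ler_sqrt; last first.
  by rewrite /fro sumr_ge0 // => i _; apply: nrm2_ge0.
by have := nrm2_mul A v; rewrite hv mulr1.
Qed.

Lemma opnorm_ub d (A : 'M[C]_d) v : vnorm v = 1 -> vnorm (A *m v) <= opnorm A.
Proof. by move=> hv; apply: (ub_le_sup (Sop_ub A)); exists v. Qed.

Definition evec {d} (i : 'I_d) : 'cV[C]_d := \col_j (j == i)%:R.
Lemma nrm2_evec d (i : 'I_d) : nrm2 (evec i) = 1.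
Proof.
rewrite /nrm2 (bigD1 i) //= big1 ?addr0.
  by rewrite mxE eqxx sqC expr1n.
by move=> j /negbTE ji; rewrite mxE ji sqC expr0n.
Qed.

Lemma opnorm_le d (A : 'M[C]_d) l : (0 < d)%N ->
  (forall v, nrm2 v = 1 -> vnorm (A *m v) <= l) -> opnorm A <= l.
Proof.
move=> d0 h; apply: ge_sup.
  exists (vnorm (A *m evec (Ordinal d0))); exists (evec (Ordinal d0)); split => //.
  by apply/vnorm1; apply: nrm2_evec.
by move=> x [v [/vnorm1 hv ->]]; apply: h.
Qed.

Lemma opnorm_ge0 d (A : 'M[C]_d) : (0 < d)%N -> 0 <= opnorm A.
Proof.
move=> d0; apply: le_trans (opnorm_ub A (v := evec (Ordinal d0)) _).
  exact: sqrtr_ge0.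
by apply/vnorm1; apply: nrm2_evec.
Qed.

Lemma opnorm_nrm2 d (A : 'M[C]_d) v : (0 < d)%N ->
  nrm2 (A *m v) <= opnorm A ^+ 2 * nrm2 v.
Proof.
move=> d0.
have [/nrm2_eq0 ->|nz] := eqVneq (nrm2 v) 0.
  by rewrite mulmx0 nrm2_0 mulr0.
have np : 0 < nrm2 v by rewrite lt_def nz nrm2_ge0.
set s := Num.sqrt (nrm2 v).
have sp : 0 < s by rewrite sqrtr_gt0.
have s2 : s ^+ 2 = nrm2 v by rewrite sqr_sqrtr // nrm2_ge0.
set w := (s^-1)%:C *: v.
have hw : nrm2 w = 1 by rewrite nrm2_scale exprVn s2 mulVf.
have := opnorm_ub A (v := w) (proj2 (vnorm1 w) hw).
rewrite /w -scalemxAr /vnorm -/(nrm2 _) nrm2_scale.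
move=> h.
have h2 : s^-1 ^+ 2 * nrm2 (A *m v) <= opnorm A ^+ 2.
  rewrite -(@sqr_sqrtr _ (_ * _)); last by rewrite mulr_ge0 ?nrm2_ge0 ?sqr_ge0.
  by rewrite lerXn2r // ?nnegrE ?sqrtr_ge0 // (le_trans _ h) ?sqrtr_ge0.
rewrite -s2; rewrite exprVn in h2.
by rewrite -ler_pdivrMr ?exprn_gt0 // mulrC.
Qed.

Lemma sqrt_le_of (x l : R) : 0 <= l -> x <= l ^+ 2 -> Num.sqrt x <= l.
Proof.
move=> l0 h; have [x0|x0] := leP x 0.
  by rewrite (_ : Num.sqrt x = 0) //; apply/eqP; rewrite sqrtr_eq0.
by rewrite -(ger0_norm l0) -sqrtr_sqr ler_sqrt // sqr_ge0.
Qed.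

Lemma OPB d (M : 'M[C]_d) (l : R) : (0 < d)%N -> psd M -> 0 <= l ->
  (forall u, complex.Re (form M u u) <= l * nrm2 u) -> opnorm M <= l.
Proof.
move=> d0 hM l0 hb; apply: opnorm_le => // w hw.
rewrite /vnorm -/(nrm2 _); apply: (sqrt_le_of l0).
set y := M *m w.
have := psd_CS y w hM.
have -> : form M y w = (nrm2 y)%:C.
  by rewrite -formI_nrm2 /form mulmx1 /y mulmxA.
rewrite sqC.
have h1 := hb y; have h2 := hb w; rewrite hw mulr1 in h2.
have g1 := (ge0C (psd_form y hM)).2; have g2 := (ge0C (psd_form w hM)).2.
move=> h; have h3 : nrm2 y ^+ 2 <= (l * nrm2 y) * l.
  by apply: (le_trans h); apply: ler_pM.
have := nrm2_ge0 y; nra.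
Qed.


Lemma ReD (x y : C) : complex.Re (x + y) = complex.Re x + complex.Re y.
Proof. by case: x; case: y. Qed.
Lemma ReN (x : C) : complex.Re (- x) = - complex.Re x.
Proof. by case: x. Qed.
Lemma ReB (x y : C) : complex.Re (x - y) = complex.Re x - complex.Re y.
Proof. by rewrite ReD ReN. Qed.
Lemma Re_sum I (r : seq I) (P : pred I) (F : I -> C) :
  complex.Re (\sum_(i <- r | P i) F i) = \sum_(i <- r | P i) complex.Re (F i).
Proof.
elim/big_rec2: _ => //; by move=> i y1 y2 _ <-; rewrite ReD.
Qed.
Lemma Re_sq_le (z : C) : complex.Re z ^+ 2 <= sq z.
Proof. by rewrite /sq lerDl sqr_ge0. Qed.

Lemma sqr_le_of (x y : R) : 0 <= y -> x ^+ 2 <= y ^+ 2 -> x <= y.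
Proof. move=> y0 h; nra. Qed.

Lemma form_le_op d (M : 'M[C]_d) u : (0 < d)%N ->
  complex.Re (form M u u) <= opnorm M * nrm2 u.
Proof.
move=> d0.
have -> : form M u u = form 1%:M u (M *m u) by rewrite /form mulmx1 mulmxA.
apply: sqr_le_of; first by rewrite mulr_ge0 ?opnorm_ge0 ?nrm2_ge0.
apply: (le_trans (Re_sq_le _)); apply: (le_trans (psd_CS _ _ (@psd1 d))).
rewrite !formI_nrm2 /= mulrC.
apply: le_trans (ler_wpM2r (nrm2_ge0 u) (opnorm_nrm2 M u d0)) _.
by rewrite exprMn expr2 mulrA.
Qed.

Definition scv {d} (m : 'I_d -> R) (u : 'cV[C]_d) : 'cV[C]_d :=
  \col_i ((m i)%:C * u i 0).

Lemma form_cong d (A B : 'M[C]_d) (m : 'I_d -> R) u u' :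
  (forall i j, A i j = (m i)%:C * B i j * (m j)%:C) ->
  form A u u' = form B (scv m u) (scv m u').
Proof.
move=> h; rewrite !formE; apply: eq_bigr => i _; apply: eq_bigr => j _.
rewrite h !mxE rmorphM /= cR; ring.
Qed.

Lemma psd_cong d (A B : 'M[C]_d) (m : 'I_d -> R) :
  (forall i j, A i j = (m i)%:C * B i j * (m j)%:C) -> psd B -> psd A.
Proof. by move=> h hB u; rewrite -/(form _ _ _) (form_cong _ _ h); apply: hB. Qed.

Lemma form_evec d (B : 'M[C]_d) i j : form B (evec i) (evec j) = B i j.
Proof.
rewrite formE (bigD1 i) //= [X in _ + X]big1 ?addr0; last first.
  by move=> k /negbTE ki; apply: big1 => l _; rewrite mxE ki /= conjC0 !mul0r.
rewrite (bigD1 j) //= [X in _ + X]big1 ?addr0; last first.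
  by move=> l /negbTE lj; rewrite [evec j l 0]mxE lj mulr0.
by rewrite !mxE !eqxx /= conjC1 mul1r mulr1.
Qed.

Lemma psd_diag d (B : 'M[C]_d) i : psd B ->
  B i i = (complex.Re (B i i))%:C /\ 0 <= complex.Re (B i i).
Proof. by move=> h; apply: ge0C; rewrite -form_evec; apply: psd_form. Qed.

Lemma psd_zero d (B : 'M[C]_d) i j : psd B -> complex.Re (B i i) = 0 ->
  B i j = 0 /\ B j i = 0.
Proof.
move=> h hi; split; apply: sq_eq0; apply/eqP; rewrite eq_le sq_ge0 andbT.
  by have := psd_CS (evec i) (evec j) h; rewrite !form_evec hi mul0r.
by have := psd_CS (evec j) (evec i) h; rewrite !form_evec hi mulr0.
Qed.

Definition sI {d} (B : 'M[C]_d) (i : 'I_d) : R :=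
  if 0 < complex.Re (B i i) then 1 else 0.

Lemma form_supp d (B : 'M[C]_d) (f g : 'I_d -> R) u : psd B ->
  form B (scv (fun i => f i * sI B i) u) (scv (fun i => g i * sI B i) u) =
  form B (scv f u) (scv g u).
Proof.
move=> h; rewrite !formE; apply: eq_bigr => i _; apply: eq_bigr => j _.
rewrite !mxE /sI.
have [hi|hi] := ltP 0 (complex.Re (B i i)); last first.
  have hi0 : complex.Re (B i i) = 0.
    by apply/eqP; rewrite eq_le hi (psd_diag i h).2.
  by rewrite (psd_zero j h hi0).1 !mulr0 !mul0r.
have [hj|hj] := ltP 0 (complex.Re (B j j)); last first.
  have hj0 : complex.Re (B j j) = 0.
    by apply/eqP; rewrite eq_le hj (psd_diag j h).2.
  by rewrite (psd_zero i h hj0).2 !mulr0 !mul0r.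
by rewrite !mulr1.
Qed.

Lemma diagMl d (G X : 'M[C]_d) (g : 'I_d -> C) i j :
  (forall i j, G i j = if i == j then g i else 0) -> (G *m X) i j = g i * X i j.
Proof.
move=> h; rewrite mxE (bigD1 i) //= big1 ?addr0 ?h ?eqxx //.
by move=> k /negbTE ki; rewrite h eq_sym ki mul0r.
Qed.
Lemma diagMr d (G X : 'M[C]_d) (g : 'I_d -> C) i j :
  (forall i j, G i j = if i == j then g i else 0) -> (X *m G) i j = X i j * g j.
Proof.
move=> h; rewrite mxE (bigD1 j) //= big1 ?addr0 ?h ?eqxx //.
by move=> k /negbTE kj; rewrite h kj mulr0.
Qed.

Definition pI {d} (I : {set 'I_d}) (i : 'I_d) : R := if i \in I then 1 else 0.
Definition dI {d} (B : 'M[C]_d) (i : 'I_d) : R :=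
  if 0 < complex.Re (B i i) then (Num.sqrt (complex.Re (B i i)))^-1 else 0.
Definition eI {d} (B : 'M[C]_d) (i : 'I_d) : R :=
  if 0 < complex.Re (B i i) then Num.sqrt (complex.Re (B i i)) else 0.

Lemma projI_diag d (I : {set 'I_d}) i j :
  projI I i j = if i == j then (pI I i)%:C else 0.
Proof. by rewrite mxE /pI; case: (i == j); case: (i \in I). Qed.
Lemma D_diag d (B : 'M[C]_d) i j :
  dephase_invsqrt B i j = if i == j then (dI B i)%:C else 0.
Proof. by rewrite mxE /dI; case: (i == j); case: (0 < _). Qed.
Lemma deph_diag d (B : 'M[C]_d) i j :
  dephase B i j = if i == j then B i i else 0.
Proof. by rewrite mxE. Qed.

Definition Mof {d} (I : {set 'I_d}) (B : 'M[C]_d) := projI I *m Rmat B *m projI I.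

Lemma Mof_entry d (I : {set 'I_d}) (B : 'M[C]_d) i j :
  Mof I B i j = (pI I i * dI B i)%:C * B i j * (pI I j * dI B j)%:C.
Proof.
rewrite /Mof /Rmat (diagMr _ _ _ (projI_diag I)) (diagMl _ _ _ (projI_diag I)).
rewrite (diagMr _ _ _ (D_diag B)) (diagMl _ _ _ (D_diag B)) !rmorphM /=; ring.
Qed.

Lemma PBP_entry d (I : {set 'I_d}) (B : 'M[C]_d) i j :
  (projI I *m B *m projI I) i j = (pI I i)%:C * B i j * (pI I j)%:C.
Proof. by rewrite (diagMr _ _ _ (projI_diag I)) (diagMl _ _ _ (projI_diag I)). Qed.

Lemma psd_Mof d (I : {set 'I_d}) (B : 'M[C]_d) : psd B -> psd (Mof I B).
Proof. by apply: psd_cong; apply: Mof_entry. Qed.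

Lemma form_deph d (B : 'M[C]_d) v : psd B ->
  form (dephase B) v v = (\sum_i complex.Re (B i i) * sq (v i 0))%:C.
Proof.
move=> h; rewrite formE rmorph_sum; apply: eq_bigr => i _.
rewrite (bigD1 i) //= big1 ?addr0; last first.
  by move=> j /negbTE ji; rewrite deph_diag eq_sym ji mulr0 mul0r.
rewrite deph_diag eqxx (psd_diag i h).1 mulrAC conjM_sq rmorphM /=; ring.
Qed.

Lemma dI_eI d (B : 'M[C]_d) i : dI B i * eI B i = sI B i.
Proof.
rewrite /dI /eI /sI; case: ifP => // h; last by rewrite mul0r.
by rewrite mulVf // gt_eqF // sqrtr_gt0.
Qed.
Lemma eI2 d (B : 'M[C]_d) i : psd B -> eI B i ^+ 2 = complex.Re (B i i).
Proof.
move=> h; rewrite /eI; case: ifP => hp; first by rewrite sqr_sqrtr // ltW.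
rewrite expr0n /=; apply/eqP; rewrite eq_le (psd_diag i h).2 /=.
by rewrite leNgt hp.
Qed.
Lemma dI2 d (B : 'M[C]_d) i : complex.Re (B i i) * dI B i ^+ 2 = sI B i.
Proof.
rewrite /dI /sI; case: ifP => hp; last by rewrite expr0n /= mulr0.
by rewrite exprVn sqr_sqrtr ?ltW // mulfV // gt_eqF.
Qed.
Lemma sI01 d (B : 'M[C]_d) i : 0 <= sI B i <= 1.
Proof. by rewrite /sI; case: ifP => _; rewrite ?lexx ?ler01. Qed.

Lemma scvK d (f g : 'I_d -> R) u : scv f (scv g u) = scv (fun i => f i * g i) u.
Proof. by apply/matrixP => i j; rewrite !mxE rmorphM /= mulrA. Qed.

Lemma nrm2_scv d (f : 'I_d -> R) u : nrm2 (scv f u) = \sum_i f i ^+ 2 * sq (u i 0).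
Proof. by apply: eq_bigr => i _; rewrite mxE sq_scale. Qed.


Lemma CM (x y : R) : (x * y)%:C = x%:C * y%:C :> C.
Proof. by rewrite rmorphM. Qed.
Lemma CB (x y : R) : (x - y)%:C = x%:C - y%:C :> C.
Proof. by rewrite rmorphB. Qed.

Lemma scv_ext d (f g : 'I_d -> R) u : (forall i, f i = g i) -> scv f u = scv g u.
Proof. by move=> h; apply/matrixP => i j; rewrite !mxE h. Qed.

Lemma Kback d (I : {set 'I_d}) (B : 'M[C]_d) (l : R) : (0 < d)%N -> psd B -> 0 <= l ->
  opnorm (Mof I B) <= l ->
  loewner_le (projI I *m B *m projI I) (l%:C *: dephase B).
Proof.
move=> d0 hB l0 hop v.
rewrite -/(form _ _ _) formBm formZm (form_deph _ hB).
set u := scv (eI B) v.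
have e1 : form (projI I *m B *m projI I) v v = form (Mof I B) u u.
  rewrite (form_cong _ _ (PBP_entry I B)) (form_cong _ _ (Mof_entry I B)) /u !scvK.
  rewrite -(form_supp (pI I) (pI I) v hB); congr form; apply: scv_ext => i;
    by rewrite -mulrA dI_eI.
have e2 : nrm2 u = \sum_i complex.Re (B i i) * sq (v i 0).
  by rewrite /u nrm2_scv; apply: eq_bigr => i _; rewrite eI2.
rewrite e1 (ge0C (psd_form u (psd_Mof I hB))).1 -CM -CB ler0c subr_ge0 -e2.
apply: (le_trans (form_le_op _ _ d0)); apply: ler_wpM2r => //; exact: nrm2_ge0.
Qed.

Lemma Kfwd d (I : {set 'I_d}) (B : 'M[C]_d) (l : R) : (0 < d)%N -> psd B -> 0 <= l ->
  loewner_le (projI I *m B *m projI I) (l%:C *: dephase B) -> opnorm (Mof I B) <= l.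
Proof.
move=> d0 hB l0 hL; apply: OPB => //; first exact: psd_Mof.
move=> u.
set v := scv (dI B) u.
have := hL v; rewrite -/(form _ _ _) formBm formZm (form_deph _ hB).
have e1 : form (projI I *m B *m projI I) v v = form (Mof I B) u u.
  by rewrite (form_cong _ _ (PBP_entry I B)) (form_cong _ _ (Mof_entry I B)) /v !scvK.
rewrite e1 (ge0C (psd_form u (psd_Mof I hB))).1 -CM -CB ler0c subr_ge0 => h.
apply: (le_trans h); apply: (ler_wpM2l l0).
rewrite /nrm2; apply: ler_sum => i _; rewrite mxE sq_scale mulrA dI2.
have /andP[_ s1] := sI01 B i.
by rewrite -[X in _ <= X]mul1r ler_wpM2r ?sq_ge0.
Qed.

Lemma psd_pair d (M : 'M[C]_d) x y : psd M ->
  complex.Re (form M x y) + complex.Re (form M y x) <=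
  complex.Re (form M x x) + complex.Re (form M y y).
Proof.
move=> h; have := psd_form (x + (-1) *: y) h.
rewrite !(formDl, formDr, formZl, formZr) rmorphN1 !mulN1r.
move: (form M x x) (form M x y) (form M y x) (form M y y) => [a1 a2] [b1 b2] [c1 c2] [e1 e2].
rewrite lecE /=; simpc => /andP[_ h1]; lra.
Qed.

Lemma form_sv d (M : 'M[C]_d) a b i j :
  form M (a *: evec i) (b *: evec j) = a^* * M i j * b.
Proof. by rewrite formZl formZr form_evec; ring. Qed.

Lemma form_split d (M : 'M[C]_d) u :
  form M u u = \sum_i \sum_j form M (u i 0 *: evec i) (u j 0 *: evec j).
Proof.
by rewrite formE; apply: eq_bigr => i _; apply: eq_bigr => j _; rewrite form_sv.
Qed.

Lemma sum_pI d (I : {set 'I_d}) : \sum_i pI I i = #|I|%:R.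
Proof. by rewrite /pI -big_mkcond /= sumr_const. Qed.

Lemma pI01 d (I : {set 'I_d}) i : pI I i = 0 \/ pI I i = 1.
Proof. by rewrite /pI; case: ifP; [right|left]. Qed.

Lemma Mof_bound d (I : {set 'I_d}) (B : 'M[C]_d) u : psd B ->
  complex.Re (form (Mof I B) u u) <= #|I|%:R * nrm2 u.
Proof.
move=> hB; set M := Mof I B.
have hM : psd M := psd_Mof I hB.
pose T i j := complex.Re (form M (u i 0 *: evec i) (u j 0 *: evec j)).
have hpair : forall i j, T i j + T j i <= T i i + T j j.
  by move=> i j; apply: psd_pair.
have hsupp : forall i j, T i j = pI I i * pI I j * T i j.
  move=> i j; rewrite /T form_sv /M Mof_entry.
  by case: (pI01 I i) => ->; case: (pI01 I j) => ->;
    rewrite ?mul0r ?mulr0 ?mul1r ?mulr1 //= ?mul0r ?mulr0 /=.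
have hQ : forall i, pI I i * T i i <= sq (u i 0).
  move=> i; rewrite /T form_sv /M Mof_entry (psd_diag i hB).1.
  have -> : (u i 0)^* * ((pI I i * dI B i)%:C * (complex.Re (B i i))%:C *
     (pI I i * dI B i)%:C) * u i 0 =
     ((pI I i * dI B i) ^+ 2 * complex.Re (B i i))%:C * ((u i 0)^* * u i 0).
    by rewrite !CM; ring.
  rewrite conjM_sq -CM /=.
  case: (pI01 I i) => ->; first by rewrite mul0r sq_ge0.
  rewrite !mul1r (mulrC (dI B i ^+ 2)) dI2.
  have /andP[s0 s1] := sI01 B i.
  by rewrite -[X in _ <= X]mul1r ler_wpM2r ?sq_ge0.
have e0 : complex.Re (form M u u) = \sum_i \sum_j T i j.
  by rewrite form_split Re_sum; apply: eq_bigr => i _; rewrite Re_sum.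
have h2 : 2 * complex.Re (form M u u) <=
          2 * ((\sum_j pI I j) * \sum_i pI I i * T i i).
  have -> : 2 * complex.Re (form M u u) = \sum_i \sum_j (T i j + T j i).
    rewrite e0 mulr2n mulrDl mul1r; rewrite [X in _ + X]exchange_big /=.
    by rewrite -big_split /=; apply: eq_bigr => i _; rewrite big_split.
  apply: (@le_trans _ _ (\sum_i \sum_j pI I i * pI I j * (T i i + T j j))).
    apply: ler_sum => i _; apply: ler_sum => j _.
    rewrite [T i j]hsupp [T j i]hsupp (mulrC (pI I j) (pI I i)) -mulrDr.
    apply: ler_wpM2l; last exact: hpair.
    by case: (pI01 I i) => ->; case: (pI01 I j) => ->; rewrite ?mul0r ?mulr1.
  rewrite mulr2n mulrDl mul1r.
  under eq_bigr => i _ do under eq_bigr => j _ do rewrite mulrDr.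
  under eq_bigr => i _ do rewrite big_split /=.
  rewrite big_split /=; apply: lerD.
    rewrite mulr_sumr; apply: ler_sum => i _; rewrite mulr_suml.
    by apply: ler_sum => j _; rewrite le_eqVlt; apply/orP; left; apply/eqP; ring.
  rewrite exchange_big /= mulr_sumr; apply: ler_sum => i _; rewrite mulr_suml.
  by apply: ler_sum => j _; rewrite le_eqVlt; apply/orP; left; apply/eqP; ring.
have h3 : complex.Re (form M u u) <= (\sum_j pI I j) * \sum_i pI I i * T i i.
  by move: h2; rewrite ler_pM2l.
apply: (le_trans h3); rewrite sum_pI; apply: ler_wpM2l => //.
by apply: ler_sum => i _; apply: hQ.
Qed.

Lemma Mof_le_card d (I : {set 'I_d}) (B : 'M[C]_d) : (0 < d)%N -> psd B ->
  opnorm (Mof I B) <= #|I|%:R.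
Proof.
move=> d0 hB; apply: OPB => //; first exact: psd_Mof.
by move=> u; apply: Mof_bound.
Qed.

Lemma Mof_single d (B : 'M[C]_d) i0 : (0 < d)%N -> psd B ->
  0 < complex.Re (B i0 i0) -> 1 <= opnorm (Mof [set i0] B).
Proof.
move=> d0 hB hp.
have e : Mof [set i0] B *m evec i0 = evec i0.
  apply/matrixP => j k; rewrite (ord1 k) mxE (bigD1 i0) //= big1 ?addr0; last first.
    by move=> l /negbTE li; rewrite [evec i0 l 0]mxE li mulr0.
  rewrite Mof_entry [evec i0 i0 0]mxE eqxx mulr1 [evec i0 j 0]mxE /pI inE.
  case: eqP => [->|_]; last by rewrite !mul0r.
  rewrite inE eqxx !mul1r (psd_diag i0 hB).1 -!CM /=.
  by rewrite mulrC mulrA -expr2 mulrC dI2 /sI hp.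
have := opnorm_ub (Mof [set i0] B) (v := evec i0) (proj2 (vnorm1 _) (nrm2_evec i0)).
by rewrite e (proj2 (vnorm1 _) (nrm2_evec i0)).
Qed.


Lemma ln2_gt0 : 0 < ln (2 : R).
Proof. by apply: ln_gt0; rewrite ltr1n. Qed.

Lemma pow2E (nu : R) : (2 : R) `^ nu = expR (nu * ln 2).
Proof. by rewrite /powR pnatr_eq0. Qed.

Lemma log2e_le (x nu : R) : (log2e x <= nu%:E)%E <-> x <= (2 : R) `^ nu.
Proof.
rewrite /log2e pow2E; case: ifP => hx.
  rewrite lee_fin ler_pdivrMr ?ln2_gt0 //.
  rewrite -ler_ln ?posrE ?expR_gt0 // expRK; by [].
split=> _; last exact: leNye.
apply: le_trans (ltW (expR_gt0 _)); by rewrite leNgt hx.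
Qed.

Lemma pow2_log (x : R) : 0 < x -> (2 : R) `^ (ln x / ln 2) = x.
Proof.
move=> x0; rewrite pow2E -mulrA mulVf ?mulr1 ?lnK ?posrE //.
by rewrite gt_eqF // ln2_gt0.
Qed.

Lemma log2eE (x : R) : 0 < x -> log2e x = (ln x / ln 2)%:E.
Proof. by move=> x0; rewrite /log2e x0. Qed.

Lemma muk_le d k (B : 'M[C]_d) (nu : R) : (0 < d)%N -> psd B ->
  (forall I : {set 'I_d}, (#|I| <= k)%N ->
     loewner_le (projI I *m B *m projI I) (((2 : R) `^ nu)%:C *: dephase B))
  <-> (muk k B <= nu%:E)%E.
Proof.
move=> d0 hB; have p0 : 0 < (2 : R) `^ nu by apply: powR_gt0.
split.
  move=> h; apply/bigmax_leP; split; first exact: leNye.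
  move=> I hI; apply/log2e_le; apply: Kfwd => //; try exact: ltW; exact: h.
move=> /bigmax_leP [_ h] I hI; apply: Kback => //; try exact: ltW.
by apply/log2e_le; apply: h.
Qed.

Lemma state_pos d (B : 'M[C]_d) : is_state B -> exists i0, 0 < complex.Re (B i0 i0).
Proof.
move=> [hB htr].
case: (pickP (fun i => 0 < complex.Re (B i i))) => [i0 hi0|hn]; first by exists i0.
exfalso.
have : complex.Re (\tr B) <= 0.
  rewrite /mxtrace Re_sum; apply: sumr_le0 => i _.
  by rewrite leNgt; move: (hn i) => /= ->.
by rewrite htr /= leNgt ltr01.
Qed.

Lemma muk_bounds d k (B : 'M[C]_d) : (1 <= k)%N -> (k <= d)%N -> is_state B ->
  (0 <= muk k B)%E /\ (muk k B <= log2e (k%:R : R))%E.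
Proof.
move=> k1 kd hS; have d0 : (0 < d)%N by apply: leq_trans kd.
have hB := hS.1.
have k0 : 0 < (k%:R : R) by rewrite ltr0n.
split.
  have [i0 hi0] := state_pos hS.
  have hle := @le_bigmax_cond _ _ _ (-oo)%E [set i0] (fun I => (#|I| <= k)%N)
    (fun I => log2e (opnorm (Mof I B))).
  rewrite cards1 in hle; apply: le_trans (hle k1).
  have h1 := Mof_single d0 hB hi0.
  rewrite /log2e (lt_le_trans ltr01 h1) lee_fin.
  by rewrite divr_ge0 ?ln_ge0 // ?ler1n // ltW // ln2_gt0.
rewrite log2eE //; apply/bigmax_leP; split; first exact: leNye.
move=> I hI; apply/log2e_le; rewrite pow2_log //.
apply: le_trans (Mof_le_card I d0 hB) _.
by rewrite ler_nat.
Qed.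


Lemma muk_fin d k (B : 'M[C]_d) : (1 <= k)%N -> (k <= d)%N -> is_state B ->
  exists m : R, muk k B = m%:E.
Proof.
move=> k1 kd hS; have [h0 h1] := muk_bounds k1 kd hS.
rewrite log2eE ?ltr0n // in h1.
move: h0 h1; case: (muk k B) => [m | |] h0 h1; [by exists m | by [] | by []].
Qed.

Lemma adjM m n p (A : 'M[C]_(m, n)) (B : 'M[C]_(n, p)) :
  adj (A *m B) = adj B *m adj A.
Proof.
apply/matrixP => i j; rewrite !mxE rmorph_sum; apply: eq_bigr => l _.
by rewrite !mxE rmorphM mulrC.
Qed.
Lemma adjK m n (A : 'M[C]_(m, n)) : adj (adj A) = A.
Proof. by apply/matrixP => i j; rewrite !mxE conjCK. Qed.

Lemma form_congK d (K X : 'M[C]_d) v :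
  form (K *m X *m adj K) v v = form X (adj K *m v) (adj K *m v).
Proof. by rewrite /form adjM adjK !mulmxA. Qed.

Lemma psd_kraus d m (K : 'I_m -> 'M[C]_d) B : psd B -> psd (kraus_apply K B).
Proof.
move=> hB v; rewrite -/(form _ _ _) /kraus_apply formSm; apply: sumr_ge0 => a _.
by rewrite form_congK; apply: hB.
Qed.

Lemma tr_kraus d m (K : 'I_m -> 'M[C]_d) B :
  \sum_a adj (K a) *m K a = 1%:M -> \tr (kraus_apply K B) = \tr B.
Proof.
move=> h; rewrite /kraus_apply raddf_sum /=.
under eq_bigr => a _ do rewrite mxtrace_mulC mulmxA.
by rewrite -raddf_sum /= -mulmx_suml h mul1mx.
Qed.

Lemma kraus_state d m (K : 'I_m -> 'M[C]_d) B :
  SIO_kraus K -> is_state B -> is_state (kraus_apply K B).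
Proof.
move=> [_ h] [hB ht]; split; first exact: psd_kraus.
by rewrite tr_kraus.
Qed.

Lemma colP d (K : 'M[C]_d) : maps_basis_to_basis K ->
  forall i i' j, K i j != 0 -> K i' j != 0 -> i = i'.
Proof.
move=> h i i' j hi hi'; have [r hr] := h j.
have e1 : i = r by apply/eqP; apply: contraLR hi => /hr ->; rewrite negbK.
have e2 : i' = r by apply/eqP; apply: contraLR hi' => /hr ->; rewrite negbK.
by rewrite e1 e2.
Qed.

Lemma rowP d (K : 'M[C]_d) : maps_basis_to_basis (adj K) ->
  forall i j j', K i j != 0 -> K i j' != 0 -> j = j'.
Proof.
move=> h i j j' hj hj'; have [c hc] := h i.
have hz : forall l, l != c -> K i l = 0.
  by move=> l /hc; rewrite !mxE => /eqP; rewrite conjC_eq0 => /eqP.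
have e1 : j = c by apply/eqP; apply: contraLR hj => /hz ->; rewrite negbK.
have e2 : j' = c by apply/eqP; apply: contraLR hj' => /hz ->; rewrite negbK.
by rewrite e1 e2.
Qed.

Lemma deph_cong d (K X : 'M[C]_d) : maps_basis_to_basis K ->
  maps_basis_to_basis (adj K) ->
  dephase (K *m X *m adj K) = K *m dephase X *m adj K.
Proof.
move=> h1 h2; have cP := colP h1; have rP := rowP h2.
apply/matrixP => a b; rewrite [LHS]mxE [RHS]mxE.
under [in RHS]eq_bigr => l _ do rewrite (diagMr _ _ _ (@deph_diag d X)) [adj K l b]mxE [map_mx _ _ b l]mxE.
case: eqP => [<-|ab]; last first.
  apply/esym/big1 => l _.
  have [->|ka] := eqVneq (K a l) 0; first by rewrite !mul0r.
  have [->|kb] := eqVneq (K b l) 0; first by rewrite conjC0 mulr0.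
  by exfalso; apply: ab; apply: cP ka kb.
rewrite mxE; apply: eq_bigr => l _.
rewrite mxE mulr_suml (bigD1 l) //= big1 ?addr0; first by rewrite !mxE.
move=> j jl.
have [->|kj] := eqVneq (K a j) 0; first by rewrite !mul0r.
rewrite /adj !mxE; have [->|kl] := eqVneq (K a l) 0; first by rewrite conjC0 mulr0.
by exfalso; move: jl; rewrite (rP _ _ _ kj kl) eqxx.
Qed.

Definition IK {d} (K : 'M[C]_d) (J : {set 'I_d}) : {set 'I_d} :=
  [set j | [exists i, (i \in J) && (K i j != 0)]].

Lemma IK_key d (K : 'M[C]_d) (J : {set 'I_d}) i j : maps_basis_to_basis K ->
  K i j != 0 -> (i \in J) = (j \in IK K J).
Proof.
move=> h kij; rewrite inE; apply/idP/existsP => [iJ|[i' /andP[i'J ki']]].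
  by exists i; rewrite iJ kij.
by rewrite (colP h kij ki').
Qed.

Lemma PK d (K : 'M[C]_d) (J : {set 'I_d}) : maps_basis_to_basis K ->
  projI J *m K = K *m projI (IK K J).
Proof.
move=> h; apply/matrixP => i j.
rewrite (diagMl _ _ _ (projI_diag J)) (diagMr _ _ _ (projI_diag (IK K J))).
have [->|kij] := eqVneq (K i j) 0; first by rewrite mulr0 mul0r.
by rewrite /pI (IK_key J h kij) mulrC.
Qed.

Lemma KP d (K : 'M[C]_d) (J : {set 'I_d}) : maps_basis_to_basis K ->
  adj K *m projI J = projI (IK K J) *m adj K.
Proof.
move=> h; apply/matrixP => a i.
rewrite (diagMr _ _ _ (projI_diag J)) (diagMl _ _ _ (projI_diag (IK K J))).
rewrite !mxE.
have [->|kij] := eqVneq (K i a) 0; first by rewrite conjC0 mulr0 mul0r.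
by rewrite /pI (IK_key J h kij) mulrC.
Qed.

Lemma IK_card d (K : 'M[C]_d) (J : {set 'I_d}) : maps_basis_to_basis (adj K) ->
  (#|IK K J| <= #|J|)%N.
Proof.
move=> h; have rP := rowP h.
pose f j := odflt j [pick i in J | K i j != 0].
have hf : forall j, j \in IK K J -> (f j \in J) && (K (f j) j != 0).
  move=> j; rewrite inE => /existsP [i hi]; rewrite /f.
  case: pickP => [i' hi' /=|hn]; first by rewrite hi'.
  by move: (hn i); rewrite hi.
have inj : {in IK K J &, injective f}.
  move=> j1 j2 h1 h2 e.
  have /andP[_ k1] := hf j1 h1; have /andP[_ k2] := hf j2 h2.
  by rewrite e in k1; apply: (rP _ _ _ k1 k2).
rewrite -(card_in_imset inj); apply: subset_leq_card.
by apply/fintype.subsetP => i /imsetP [j hj ->]; have /andP[] := hf j hj.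
Qed.

Lemma conj_PKP d (K X : 'M[C]_d) (J : {set 'I_d}) : maps_basis_to_basis K ->
  projI J *m (K *m X *m adj K) *m projI J =
  K *m (projI (IK K J) *m X *m projI (IK K J)) *m adj K.
Proof.
move=> h; rewrite !mulmxA (PK J h) -(mulmxA _ (adj K)) (KP J h).
by rewrite !mulmxA.
Qed.

Lemma deph_sum d m (X : 'I_m -> 'M[C]_d) : dephase (\sum_a X a) = \sum_a dephase (X a).
Proof.
apply/matrixP => i j; rewrite mxE [RHS]summxE summxE; case: eqP => [<-|ij].
  by apply: eq_bigr => a _; rewrite mxE eqxx.
by apply/esym/big1 => a _; rewrite mxE (introF eqP ij).
Qed.

Lemma SIO_step d m k (K : 'I_m -> 'M[C]_d) B (l : R) : SIO_kraus K ->
  (forall I : {set 'I_d}, (#|I| <= k)%N ->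
     loewner_le (projI I *m B *m projI I) (l%:C *: dephase B)) ->
  (forall J : {set 'I_d}, (#|J| <= k)%N ->
     loewner_le (projI J *m kraus_apply K B *m projI J)
                (l%:C *: dephase (kraus_apply K B))).
Proof.
move=> [hK _] h J hJ v.
rewrite -/(form _ _ _) formBm formZm /kraus_apply deph_sum.
under eq_bigr => a _ do rewrite (deph_cong _ (hK a).1 (hK a).2).
rewrite mulmx_sumr mulmx_suml.
under [X in _ - form X _ _]eq_bigr => a _ do rewrite (conj_PKP _ _ (hK a).1).
rewrite !formSm mulr_sumr -sumrB; apply: sumr_ge0 => a _.
rewrite !form_congK -formZm -formBm; apply: h.
exact: leq_trans (IK_card _ (hK a).2) hJ.
Qed.


End Aux.
Arguments sq {R}. Arguments nrm2 {R d}. Arguments form {R d}. Arguments fro {R d}.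
Arguments Sop {R d}. Arguments evec {R d}. Arguments scv {R d}. Arguments sI {R d}.
Arguments pI {R d}. Arguments dI {R d}. Arguments eI {R d}. Arguments Mof {R d}.
Arguments IK {R d}.
Arguments pI01 {R d}. Arguments sum_pI {R d}.

Section Aux2.
Variable R : realType.
Local Notation C := R[i].
Local Open Scope complex_scope.
Lemma normC_real (x : R) : `|x%:C| = `|x|%:C :> C.
Proof. by rewrite normc_def /= expr0n /= addr0 sqrtr_sqr. Qed.

Lemma Qentry d (I : {set 'I_d}) (X : 'M[C]_d) (l : R) i j :
  (l%:C *: dephase X - projI I *m X *m projI I) i j =
  l%:C * (if i == j then X i i else 0) - (pI I i)%:C * X i j * (pI I j)%:C.
Proof. by rewrite mxE [X in _ + X]mxE PBP_entry; congr (_ - _); rewrite !mxE. Qed.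

Lemma Qreal d (I : {set 'I_d}) (X : 'M[C]_d) (l : R) v : psd X ->
  form (l%:C *: dephase X - projI I *m X *m projI I) v v =
  (l * (\sum_i complex.Re (X i i) * sq (v i 0)) -
   complex.Re (form (projI I *m X *m projI I) v v))%:C.
Proof.
move=> hX; rewrite formBm formZm (form_deph _ hX) CB CM.
congr (_ - _).
rewrite (form_cong _ _ (PBP_entry I X)).
exact: (ge0C (psd_form _ hX)).1.
Qed.

Lemma pI_norm d (I : {set 'I_d}) i : `|(pI I i)%:C| <= 1 :> C.
Proof.
rewrite normC_real (_ : (1 : C) = (1 : R)%:C) // lecR /pI.
by case: (i \in I); rewrite ?normr0 ?normr1 ?ler01.
Qed.

Lemma lsc_part d k : (1 <= k)%N -> (k <= d)%N ->
  lsc_on_states (fun rho : 'M[C]_d => muk k rho).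
Proof.
move=> k1 kd; have d0 : (0 < d)%N := leq_trans k1 kd.
move=> rho hS t ht.
set l := (2 : R) `^ t.
have l0 : 0 < l by apply: powR_gt0.
have : ~ (forall I : {set 'I_d}, (#|I| <= k)%N ->
     loewner_le (projI I *m rho *m projI I) (l%:C *: dephase rho)).
  move/(muk_le _ _ d0 hS.1) => h; move: ht; by rewrite ltNge h.
move/existsNP => [I /not_implyP [hI hn]].
move: hn; rewrite /loewner_le /psd => /existsNP [v hv].
rewrite -/(form _ _ _) (Qreal _ _ _ hS.1) ler0c in hv.
set rv := fun sigma : 'M[C]_d => l * (\sum_i complex.Re (sigma i i) * sq (v i 0)) -
   complex.Re (form (projI I *m sigma *m projI I) v v).
rewrite -/(rv rho) in hv.
have {}hv : rv rho < 0 by rewrite ltNge; apply/negP.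
set r0 := - rv rho.
have r0p : 0 < r0 by rewrite /r0 oppr_gt0.
set B := \sum_i \sum_j `|v i 0| * `|v j 0|.
have B0 : 0 <= B by apply: sumr_ge0 => i _; apply: sumr_ge0 => j _; rewrite mulr_ge0.
set b := complex.Re B.
have Bb : B = b%:C := (ge0C B0).1.
have b0 : 0 <= b := (ge0C B0).2.
set eps := r0 / ((l + 1) * (b + 1)).
have l1 : 0 < l + 1 := addr_gt0 l0 ltr01.
have b1 : 0 < b + 1 := ltr_wpDl b0 ltr01.
have ep : 0 < eps := divr_gt0 r0p (mulr_gt0 l1 b1).
exists eps; first exact: ep.
move=> sigma hS' hclose.
rewrite ltNge; apply/negP => hle.
have := (proj2 (muk_le _ _ d0 hS'.1) hle) I hI v.
rewrite -/(form _ _ _) (Qreal _ _ _ hS'.1) ler0c -/(rv sigma) => hs.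
set c := (l + 1) * eps.
have cp : 0 < c by rewrite mulr_gt0.
have hdiff : `|rv sigma - rv rho| <= c * b.
  rewrite -lecR -normC_real CB -(Qreal _ _ _ hS'.1) -(Qreal _ _ _ hS.1).
  rewrite !formE -sumrB.
  apply: (le_trans (ler_norm_sum _ _ _)).
  rewrite CM -Bb mulr_sumr; apply: ler_sum => i _.
  rewrite -sumrB; apply: (le_trans (ler_norm_sum _ _ _)).
  rewrite mulr_sumr; apply: ler_sum => j _.
  rewrite -mulrBl -mulrBr !Qentry.
  rewrite !normrM norm_conjC.
  have hD : `|l%:C * (if i == j then sigma i i else 0) -
              (pI I i)%:C * sigma i j * (pI I j)%:C -
             (l%:C * (if i == j then rho i i else 0) -
              (pI I i)%:C * rho i j * (pI I j)%:C)| <= c%:C.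
    have -> : l%:C * (if i == j then sigma i i else 0) -
              (pI I i)%:C * sigma i j * (pI I j)%:C -
             (l%:C * (if i == j then rho i i else 0) -
              (pI I i)%:C * rho i j * (pI I j)%:C) =
             l%:C * (if i == j then sigma i i - rho i i else 0) -
              (pI I i)%:C * (sigma i j - rho i j) * (pI I j)%:C.
      by case: (i == j); ring.
    apply: (le_trans (ler_normB _ _)).
    have -> : c%:C = (l * eps)%:C + eps%:C :> C.
      by rewrite /c -rmorphD /= mulrDl mul1r.
    apply: lerD.
      rewrite normrM (ger0_norm (x := l%:C)); last by rewrite ler0c; apply: ltW.
      rewrite CM; apply: ler_wpM2l; first by rewrite ler0c; apply: ltW.
      case: (i == j); last by rewrite normr0 ler0c; apply: ltW.
      exact: ltW (hclose i i).
    rewrite !normrM -[X in _ <= X]mul1r -[X in _ <= X]mulr1.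
    apply: ler_pM; [by rewrite mulr_ge0 ?normr_ge0 | exact: normr_ge0 | | exact: pI_norm].
    apply: ler_pM; [exact: normr_ge0 | exact: normr_ge0 | exact: pI_norm | ].
    exact: ltW (hclose i j).
  apply: (@le_trans _ _ (`|v i 0| * c%:C * `|v j 0|)).
    apply: (ler_wpM2r (normr_ge0 _)); apply: (ler_wpM2l (normr_ge0 _)); exact: hD.
  rewrite mulrAC mulrC; exact: lexx.
have e1 : c * (b + 1) = r0.
  rewrite /c /eps; field; by rewrite (gt_eqF b1) (gt_eqF l1).
have hn := ler_norm (rv sigma - rv rho).
rewrite mulrDr mulr1 in e1.
have e2 : c * b = r0 - c by rewrite -e1 addrK.
have key : forall x y z w : R, x - y <= z -> z = - y - w -> 0 < w -> x < 0.
  move=> x y z w h1 h2 h3; lra.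
have := key _ _ _ _ (le_trans hn hdiff) e2 cp.
by rewrite ltNge hs.
Qed.

End Aux2.


Unset Implicit Arguments.


Theorem lemma3 (R : realType) (d k : nat) (hk1 : (1 <= k)%N) (hkd : (k <= d)%N) :
  (* (a) *)
  (forall rho : 'M[R[i]]_d, is_state rho ->
     (0 <= muk k rho)%E /\ (muk k rho <= log2e (k%:R : R))%E) /\
  (* (b) *)
  (forall rho : 'M[R[i]]_d, is_state rho ->
     muk k rho = ereal_inf [set nu%:E | nu in [set nu : R |
       forall I : {set 'I_d}, (#|I| <= k)%N ->
         loewner_le (projI I *m rho *m projI I)
                    (((2 : R) `^ nu)%:C%C *: dephase rho)]]) /\
  (* (c) *)
  (forall (m : nat) (K : 'I_m -> 'M[R[i]]_d), SIO_kraus K ->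
     forall rho : 'M[R[i]]_d, is_state rho ->
       (muk k (kraus_apply K rho) <= muk k rho)%E) /\
  (* (d) *)
  lsc_on_states (fun rho : 'M[R[i]]_d => muk k rho).
Proof.
have d0 : (0 < d)%N := leq_trans hk1 hkd.
split; [|split; [|split]].
- by move=> rho hS; apply: muk_bounds.
- move=> rho hS.
  have [mm hm] := muk_fin hk1 hkd hS.
  apply: le_anti; apply/andP; split.
    apply: le_ereal_inf_tmp => _ [nu hnu <-].
    exact: (proj1 (muk_le k nu d0 hS.1) hnu).
  rewrite hm; apply: ereal_inf_lbound; exists mm => //.
  by apply/(muk_le k mm d0 hS.1); rewrite hm.
- move=> m K hK rho hS.
  have hS2 := kraus_state hK hS.
  have [mm hm] := muk_fin hk1 hkd hS.
  rewrite hm; apply/(muk_le k mm d0 hS2.1); apply: SIO_step hK _.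
  by apply/(muk_le k mm d0 hS.1); rewrite hm.
- exact: lsc_part.
Qed.
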